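(* Let $c>0$ and consider the function $$F(L,L_2)=\frac{L^3L_2(3L+2L_2)}{(2L+L_2)^4}$$ on the set $\{(L,L_2): L>0,\ L_2>0,\ 2L+L_2=c\}$. Then $F$ has a unique maximizer on this set, given by $$L^*=c\Bigl(1-\sqrt{\tfrac{2}{5}}\Bigr),\qquad L_2^*=c\Bigl(2\sqrt{\tfrac{2}{5}}-1\Bigr),$$ so that the optimal ratio is $\dfrac{L_2^*}{L^*}=\dfrac{\sqrt{10}-1}{3}\approx 0.721$.
   Context: This concerns Purcell's three-link swimmer: a planar swimmer made of three rigid segments joined end to end, with two outer links of length $L$ and a central link of length $L_2$, total length $2L+L_2=c$. In the paper, $F(L,L_2)$ multiplied by $\frac{\eta-\xi}{\xi}$ (with $\xi,\eta$ the tangential and normal drag coefficients of Resistive Force Theory) is the $x$-component of the Lie bracket $[\mathbf g_1,\mathbf g_2]$ of the swimmer's control vector fields at the straight configuration, which is the leading-order coefficient of the $x$-displacement produced by a small stroke (closed curve in the joint-angle plane); maximizing $F$ under the fixed total length constraint yields the optimal link-length ratio. *)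

(* Defs.v *)
From mathcomp Require Import all_boot all_order all_algebra.
Set Implicit Arguments. Unset Strict Implicit. Unset Printing Implicit Defensive.
Import Order.TTheory GRing.Theory Num.Theory.
Local Open Scope ring_scope.

Definition purcellF (R : rcfType) (L L2 : R) : R :=
  L ^+ 3 * L2 * (3 * L + 2 * L2) / (2 * L + L2) ^+ 4.

Definition admissible (R : rcfType) (c L L2 : R) : Prop :=
  0 < L /\ 0 < L2 /\ 2 * L + L2 = c.

(* Main.v *)
Require Import Defs.
From mathcomp Require Import all_boot all_order all_algebra.
From mathcomp Require Import ring lra.
Import Order.TTheory GRing.Theory Num.Theory.
Set Implicit Arguments. Unset Strict Implicit.
Local Open Scope ring_scope.

Definition gg (R : rcfType) (t : R) : R := 2 * t ^+ 3 - 5 * t ^+ 4 + 2 * t ^+ 5.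

Lemma gg_F (R : rcfType) (c L L2 : R) : 0 < c -> admissible c L L2 ->
  purcellF L L2 = c * gg (L / c).
Proof.
move=> hc [hL [hL2 e]]; rewrite /purcellF /gg e.
have -> : L2 = c - 2 * L by rewrite -e; ring.
have c0 : c != 0 by rewrite gt_eqF.
by field.
Qed.

Lemma key (R : rcfType) (s t : R) : s ^+ 2 = 2 / 5 -> 1/2 < s -> s < 1 ->
  0 < t -> t < 1/2 ->
  gg t - gg (1 - s) = (t - (1 - s)) ^+ 2 *
     (t ^+ 2 * (2 * t - 1 - 4 * s) + (2/5 - 2 * s) * t + (1 - s) * (1/5 - s)).
Proof.
move=> hs h1 h2 ht1 ht2.
set a := 1 - s.
have I : gg t - gg a = (t - a) ^+ 2 * (2 * t ^+ 3 + (4*a-5) * t ^+ 2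
   + (2 + 6*a^+2 - 10*a) * t + (8*a^+3 - 15*a^+2 + 4*a))
   - (a^+2 * (2 + 6*a^+2 - 10*a) - 2*a*(8*a^+3 - 15*a^+2 + 4*a)) * t
   - (gg a + a^+2 * (8*a^+3 - 15*a^+2 + 4*a)).
  rewrite /gg; ring.
have s3 : s ^+ 3 = 2/5 * s by rewrite exprS hs mulrC.
have s4 : s ^+ 4 = 4/25 by rewrite (exprD _ 2 2) hs; by field.
have s5 : s ^+ 5 = 4/25 * s by rewrite exprS s4 mulrC.
have s6 : s ^+ 6 = 8/125 by rewrite (exprD _ 4 2) s4 hs; by field.
have E1 : a^+2 * (2 + 6*a^+2 - 10*a) - 2*a*(8*a^+3 - 15*a^+2 + 4*a) = 0.
  rewrite /a.
  have -> : (1 - s) ^+ 2 * (2 + 6 * (1 - s) ^+ 2 - 10 * (1 - s)) -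
    2 * (1 - s) * (8 * (1 - s) ^+ 3 - 15 * (1 - s) ^+ 2 + 4 * (1 - s)) =
    4 - 8 * s - 6 * s^+2 + 20 * s^+3 - 10 * s^+4 by ring.
  rewrite s4 s3 hs; by field.
have E0 : gg a + a^+2 * (8*a^+3 - 15*a^+2 + 4*a) = 0.
  rewrite /a /gg.
  have -> : 2 * (1 - s) ^+ 3 - 5 * (1 - s) ^+ 4 + 2 * (1 - s) ^+ 5 +
    (1 - s) ^+ 2 * (8 * (1 - s) ^+ 3 - 15 * (1 - s) ^+ 2 + 4 * (1 - s)) =
    -4 + 12 * s - 2 * s^+2 - 26 * s^+3 + 30 * s^+4 - 10 * s^+5 by ring.
  rewrite s5 s4 s3 hs; by field.
rewrite -/a I E1 E0 /a mul0r !subr0.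
have -> : (1 - s) * (1 / 5 - s) = 8 * (1 - s) ^+ 3 - 15 * (1 - s) ^+ 2 + 4 * (1 - s).
  have -> : 8 * (1 - s) ^+ 3 - 15 * (1 - s) ^+ 2 + 4 * (1 - s) =
    -3 + 2 * s + 9 * s^+2 - 8 * s^+3 by ring.
  have -> : (1 - s) * (1 / 5 - s) = 1/5 - 6/5 * s + s^+2 by field.
  rewrite s3 hs; by field.
have -> : 2/5 - 2 * s = 2 + 6 * (1 - s) ^+ 2 - 10 * (1 - s).
  have -> : 2 + 6 * (1 - s) ^+ 2 - 10 * (1 - s) = 6 * s^+2 - 2 * s - 2 by ring.
  rewrite hs; by field.
ring.
Qed.

Lemma hneg (R : rcfType) (s t : R) : 1/2 < s -> s < 1 -> 0 < t -> t < 1/2 ->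
  t ^+ 2 * (2 * t - 1 - 4 * s) + (2/5 - 2 * s) * t + (1 - s) * (1/5 - s) < 0.
Proof.
move=> h1 h2 ht1 ht2.
have A : t ^+ 2 * (2 * t - 1 - 4 * s) < 0.
  rewrite pmulr_rlt0; first lra.
  by rewrite exprn_gt0.
have B : (2/5 - 2 * s) * t < 0 by rewrite pmulr_llt0 //; lra.
have C : (1 - s) * (1/5 - s) < 0 by rewrite pmulr_rlt0; lra.
lra.
Qed.

Theorem mainTheorem1 (R : rcfType) (c : R) (hc : 0 < c) :
  let Ls := c * (1 - Num.sqrt (2 / 5)) in
  let L2s := c * (2 * Num.sqrt (2 / 5) - 1) in
  [/\ admissible c Ls L2s,
      (forall L L2 : R, admissible c L L2 ->
         purcellF L L2 <= purcellF Ls L2s),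
      (forall L L2 : R, admissible c L L2 ->
         purcellF L L2 = purcellF Ls L2s -> L = Ls /\ L2 = L2s)
    & L2s / Ls = (Num.sqrt 10 - 1) / 3].
Proof.
move=> Ls L2s.
set s := Num.sqrt (2 / 5) in Ls L2s *.
have hs : s ^+ 2 = 2 / 5 by rewrite /s sqr_sqrtr //; lra.
have s0 : 0 <= s by rewrite /s sqrtr_ge0.
have h1 : 1/2 < s by nra.
have h2 : s < 1 by nra.
have c0 : c != 0 by rewrite gt_eqF.
have adm : admissible c Ls L2s.
  split; first by rewrite /Ls mulr_gt0 //; lra.
  split; first by rewrite /L2s mulr_gt0 //; lra.
  rewrite /Ls /L2s; ring.
have FS : purcellF Ls L2s = c * gg (1 - s).
  rewrite (gg_F hc adm); congr (_ * gg _); rewrite /Ls; by field.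
have tb : forall L L2, admissible c L L2 -> 0 < L / c /\ L / c < 1/2.
  move=> L L2 [hL [hL2 e]]; split; first by rewrite divr_gt0.
  have e' : L2 = c - 2 * L by rewrite -e; ring.
  have : 1/2 - L / c = L2 / (2 * c) by rewrite e'; field.
  have : 0 < L2 / (2 * c) by rewrite divr_gt0 // mulr_gt0.
  lra.
have diff : forall L L2, admissible c L L2 ->
    purcellF L L2 - purcellF Ls L2s =
    c * ((L / c - (1 - s)) ^+ 2 * ((L/c) ^+ 2 * (2 * (L/c) - 1 - 4 * s)
      + (2/5 - 2 * s) * (L/c) + (1 - s) * (1/5 - s))).
  move=> L L2 hA; have [t1 t2] := tb _ _ hA.
  by rewrite (gg_F hc hA) FS -mulrBr (key hs h1 h2 t1 t2).
split => //.
- move=> L L2 hA; have [t1 t2] := tb _ _ hA.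
  rewrite -subr_le0 (diff _ _ hA).
  rewrite pmulr_rle0 //.
  apply: mulr_ge0_le0; first by rewrite sqr_ge0.
  exact/ltW/hneg.
- move=> L L2 hA E; have [t1 t2] := tb _ _ hA.
  have := diff _ _ hA; rewrite E subrr => /esym/eqP.
  rewrite mulf_eq0 (negbTE c0) /= mulf_eq0 (negbTE (ltr0_neq0 (hneg h1 h2 t1 t2))) orbF.
  rewrite sqrf_eq0 subr_eq0 => /eqP ht.
  have eL : L = Ls by rewrite /Ls -ht mulrC divfK.
  split => //.
  case: hA => _ [_ e]; rewrite /L2s; rewrite eL /Ls in e.
  have -> : L2 = c - 2 * (c * (1 - s)) by lra.
  ring.
- have -> : Num.sqrt 10 = 5 * s.
    have -> : (10 : R) = (5 * s) ^+ 2 by rewrite exprMn hs; field.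
    by rewrite sqrtr_sqr ger0_norm // mulr_ge0.
  have s1 : 1 - s != 0 by rewrite lt0r_neq0 //; lra.
  rewrite /L2s /Ls.
  apply/eqP; rewrite eq_sym -subr_eq0; apply/eqP.
  have -> : (5 * s - 1) / 3 - c * (2 * s - 1) / (c * (1 - s)) =
     (5 * s - 1) / 3 - (2 * s - 1) / (1 - s) by field; rewrite c0 s1.
  have -> : (5 * s - 1) / 3 - (2 * s - 1) / (1 - s) =
     (2 - 5 * s ^+ 2) / (3 * (1 - s)) by field.
  by rewrite hs; field.
Qed.
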